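(* Let $(\mathcal A,r)$ be a population game, $\mathcal G=(\mathcal H,\boldsymbol\eta,W)$ an undirected connected community network, and $\mathbf f$ an imitation mechanism satisfying Assumption 1. Let $\mathbf x(t)$ be the solution of the network imitation dynamics with initial condition $\mathbf x(0)\in\mathcal X^\bullet$ and $\mathbf y(t)=\mathbf x(t)\mathbf 1$. Then (i) $\mathbf y(t)=\mathbf y(0)$ for all $t\ge0$; (ii) $\mathbf x(t)\in\mathcal X^\bullet$ for all $t\ge 0$.
   Context: Let $\mathcal A$ be a finite set of actions and $\mathcal Y=\{\mathbf y\in\mathbb R_+^{\mathcal A}:\mathbf 1^\top\mathbf y=1\}$. A population game $(\mathcal A,r)$ consists of reward functions $r_i:\mathcal Y\to\mathbb R$. A community network $\mathcal G=(\mathcal H,\boldsymbol\eta,W)$: finite set $\mathcal H$, $\boldsymbol\eta\in\mathbb R^{\mathcal H}$ with $\eta_h>0$, $\sum_h\eta_h=1$, and nonnegative $W\in\mathbb R_+^{\mathcal H\times\mathcal H}$ with positive diagonal; connected means $W$ irreducible, undirected means $W=W^\top$. System states: $\mathcal X=\{\mathbf x\in\mathbb R_+^{\mathcal A\times\mathcal H}:\mathbf 1^\top\mathbf x=\boldsymbol\eta^\top\}$. An imitation mechanism is a Lipschitz map $\mathbf f:\mathcal Y\to\mathbb R_+^{\mathcal A\times\mathcal A}$. Network imitation dynamics: $$\dot x_{ih}=\sum_{j\in\mathcal A}\sum_{k\in\mathcal H}\big(x_{jh}W_{hk}x_{ik}f_{ji}(\mathbf x\mathbf 1)-x_{ih}W_{hk}x_{jk}f_{ij}(\mathbf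 x\mathbf 1)\big).$$ Assumption 1: $\operatorname{sgn}(f_{ij}(\mathbf y)-f_{ji}(\mathbf y))=\operatorname{sgn}(r_j(\mathbf y)-r_i(\mathbf y))$ for all $i,j,\mathbf y$. $\mathcal Y^\bullet=\{\mathbf y\in\mathcal Y: y_i>0,y_j>0\Rightarrow r_i(\mathbf y)=r_j(\mathbf y)\}$, $\mathcal X^\bullet=\{\mathbf x\in\mathcal X:\mathbf x\mathbf 1\in\mathcal Y^\bullet\}$. *)

(* Defs.v *)
From HB Require Import structures.
From mathcomp Require Import all_boot all_order all_algebra.
From mathcomp Require Import all_classical all_reals topology normedtype derive.
Set Implicit Arguments. Unset Strict Implicit. Unset Printing Implicit Defensive.
Import Order.TTheory GRing.Theory Num.Theory.
Import numFieldNormedType.Exports.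
Local Open Scope classical_set_scope.
Local Open Scope ring_scope.

Section Defs.
Variables (R : realType) (A H : finType).

Definition in_simplex (y : A -> R) : Prop :=
  (forall i, 0 <= y i) /\ \sum_(i : A) y i = 1.

Definition community_network (eta : H -> R) (W : H -> H -> R) : Prop :=
  (forall h, 0 < eta h) /\ \sum_(h : H) eta h = 1 /\
  (forall h k, 0 <= W h k) /\ (forall h, 0 < W h h).

Definition undirected (W : H -> H -> R) : Prop := forall h k, W h k = W k h.

Definition connected_net (W : H -> H -> R) : Prop :=
  forall h k, connect (fun a b => 0 < W a b) h k.

Definition in_states (eta : H -> R) (x : A -> H -> R) : Prop :=
  (forall i h, 0 <= x i h) /\ (forall h, \sum_(i : A) x i h = eta h).

Definition agg (x : A -> H -> R) : A -> R := fun i => \sum_(h : H) x i h.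

Definition imitation_mechanism (f : (A -> R) -> A -> A -> R) : Prop :=
  (forall y, in_simplex y -> forall i j, 0 <= f y i j) /\
  exists L : R, forall y y', in_simplex y -> in_simplex y' ->
    forall i j, `|f y i j - f y' i j| <= L * \sum_(k : A) `|y k - y' k|.

Definition assumption1 (r : (A -> R) -> A -> R) (f : (A -> R) -> A -> A -> R)
  : Prop :=
  forall i j y, in_simplex y -> Num.sg (f y i j - f y j i) = Num.sg (r y j - r y i).

Definition in_Ybullet (r : (A -> R) -> A -> R) (y : A -> R) : Prop :=
  in_simplex y /\ forall i j, 0 < y i -> 0 < y j -> r y i = r y j.

Definition in_Xbullet (r : (A -> R) -> A -> R) (eta : H -> R) (x : A -> H -> R)
  : Prop := in_states eta x /\ in_Ybullet r (agg x).

Definition imitation_field (W : H -> H -> R) (f : (A -> R) -> A -> A -> R)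
  (x : A -> H -> R) (i : A) (h : H) : R :=
  \sum_(j : A) \sum_(k : H)
    (x j h * W h k * x i k * f (agg x) j i - x i h * W h k * x j k * f (agg x) i j).

Definition is_solution (eta : H -> R) (W : H -> H -> R)
  (f : (A -> R) -> A -> A -> R) (x : R -> A -> H -> R) : Prop :=
  (forall t : R, 0 <= t -> in_states eta (x t)) /\
  (forall i h, (fun s => x s i h) @ at_right (0 : R) --> x 0 i h) /\
  (forall t : R, 0 < t -> forall i h,
      is_derive t (1 : R) (fun s => x s i h) (imitation_field W f (x t) i h)).

End Defs.

(* Main.v *)
Require Import Defs.
From HB Require Import structures.
From mathcomp Require Import all_boot all_order all_algebra.
From mathcomp Require Import all_classical all_reals topology normedtype sequences derive exp realfun.
From mathcomp Require Import ring lra.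
Import Order.TTheory GRing.Theory Num.Theory.
Import numFieldNormedType.Exports.
Local Open Scope classical_set_scope.
Local Open Scope ring_scope.

Section Gen.
Variable R : realType.

Lemma is_derive_fsum (I : finType) (F : I -> R -> R) (dF : I -> R) (t : R) :
  (forall i, is_derive t 1 (F i) (dF i)) ->
  is_derive t 1 (fun s => \sum_(i : I) F i s) (\sum_(i : I) dF i).
Proof.
move=> hF.
have -> : (fun s => \sum_(i : I) F i s) = \sum_(i : I) F i.
  by apply/funext => s; rewrite fct_sumE.
by elim/big_ind2 : _ => // [|] *; [exact: is_derive_cst|exact: is_deriveD].
Qed.

Lemma cvg_fsum (I : finType) (F : I -> R -> R) (l : I -> R) (a : R) :
  (forall i, F i @ a^'+ --> l i) ->
  (fun s => \sum_(i : I) F i s) @ a^'+ --> \sum_(i : I) l i.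
Proof.
move=> hF.
have -> : (fun s => \sum_(i : I) F i s) = \sum_(i : I) F i.
  by apply/funext => s; rewrite fct_sumE.
elim/big_ind2 : _ => // [|f1 l1 f2 l2 h1 h2].
  exact: cvg_cst.
exact: cvgD.
Qed.

Lemma is_derive_sq (g : R -> R) (t d : R) : is_derive t 1 g d ->
  is_derive t 1 (fun s => g s ^+ 2) (2 * g t * d).
Proof.
move=> hg.
have -> : (fun s => g s ^+ 2) = g * g by apply/funext => s; rewrite expr2.
apply: is_derive_eq.
  by rewrite /GRing.scale /=; ring.
Qed.

Lemma gronwall0 (D dD : R -> R) (c : R) :
  (forall s : R, 0 <= s -> 0 <= D s) -> D 0 = 0 ->
  D @ 0^'+ --> D 0 ->
  (forall s : R, 0 < s -> is_derive s 1 D (dD s)) ->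
  (forall s : R, 0 < s -> dD s <= c * D s) ->
  forall T, 0 <= T -> D T = 0.
Proof.
move=> D0 D00 Dc dDh dDle T; rewrite le_eqVlt => /predU1P[<-//|T0].
pose e := fun s : R => expR (- c * s).
have de (s : R) : is_derive s 1 e (expR (- c * s) * (- c)).
  rewrite /e; have -> : (fun s => expR (- c * s)) = expR \o (fun s => - c * s) by [].
  apply: is_derive1_comp.
  have -> : (fun s : R => - c * s) = (fun s => (- c) *: s) by [].
  apply: is_derive_eq.
  by rewrite /GRing.scale /= mulr1.
pose g := fun s => e s * D s.
have dg (s : R) : 0 < s -> is_derive s 1 g (e s * dD s + D s * (expR (- c * s) * (- c))).
  move=> s0; have -> : g = e * D by [].
  apply: (is_derive_eq (is_deriveM (de s) (dDh s s0))).
  by rewrite /GRing.scale /=.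
have dgle (s : R) : 0 < s -> e s * dD s + D s * (expR (- c * s) * (- c)) <= 0.
  move=> s0; rewrite /e.
  have := dDle s s0; have := expR_gt0 (- c * s); nra.
have gc : {within `[0, T], continuous g}.
  apply/continuous_within_itvP => //; split.
  - move=> s; rewrite in_itv /= => /andP[s0 _].
    have [dv _] := dg s s0.
    by apply: differentiable_continuous; rewrite -derivable1_diffP.
  - apply: cvgM; last exact: Dc.
    apply: cvg_at_right_filter; have [dv _] := de 0.
    by apply: differentiable_continuous; rewrite -derivable1_diffP.
  - have [dv _] := dg T T0.
    by apply: cvg_at_left_filter; apply: differentiable_continuous; rewrite -derivable1_diffP.
have hd : forall s, s \in `]0, T[ -> is_derive s 1 g
   ((fun s => e s * dD s + D s * (expR (- c * s) * - c)) s).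
  by move=> s; rewrite in_itv /= => /andP[s0 _]; exact: dg.
have [s sT] := MVT T0 hd gc.
move: sT; rewrite in_itv /= => /andP[s0 _] hg.
have := dgle s s0 => hle.
have gT : g T <= 0.
  have : g T - g 0 <= 0.
    by rewrite hg subr0; apply: mulr_le0_ge0 => //; exact: ltW.
  by rewrite /g D00 mulr0 subr0.
have eT := expR_gt0 (- c * T).
rewrite /g /e in gT.
have := D0 T (ltW T0) => DT; apply: le_anti; apply/andP; split; nra.
Qed.
End Gen.
Section P.
Variables (R : realType) (A H : finType).

Lemma le_sum1 {I : finType} (F : I -> R) i : (forall j, 0 <= F j) -> F i <= \sum_j F j.
Proof.
move=> F0; rewrite (bigD1 i) //= lerDl; apply: sumr_ge0 => j _; exact: F0.
Qed.

Lemma states_simplex (eta : H -> R) (x : A -> H -> R) : in_states eta x -> \sum_h eta h = 1 ->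
  in_simplex (agg x).
Proof.
move=> [x0 xs] e1; split.
  by move=> i; apply: sumr_ge0 => h _; exact: x0.
rewrite /agg exchange_big /= -e1; apply: eq_bigr => h _; exact: xs.
Qed.

Lemma x_le_agg (eta : H -> R) (x : A -> H -> R) i h : in_states eta x -> x i h <= agg x i.
Proof. by move=> [x0 _]; rewrite /agg; apply: (le_sum1 (fun h => x i h)) => k; exact: x0. Qed.

Lemma x_le1 (eta : H -> R) (x : A -> H -> R) i h : in_states eta x -> \sum_h eta h = 1 -> x i h <= 1.
Proof.
move=> [x0 xs] e1; apply: (le_trans (le_sum1 (fun i => x i h) i _)).
  by move=> j; exact: x0.
rewrite xs -e1; apply: (le_sum1 eta) => k.
by rewrite -xs; apply: sumr_ge0 => j _; exact: x0.
Qed.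

Lemma dist_le2 (y y0 : A -> R) : in_simplex y -> in_simplex y0 ->
  \sum_k `|y k - y0 k| <= 2.
Proof.
move=> [y0' y1] [z0 z1].
apply: (le_trans (y := \sum_k (y k + y0 k))).
  apply: ler_sum => k _; apply: (le_trans (ler_normB _ _)).
  by rewrite !ger0_norm.
by rewrite big_split /= y1 z1.
Qed.

Lemma f_bound (f : (A -> R) -> A -> A -> R) (L : R) (y0 : A -> R) :
  in_simplex y0 ->
  (forall y y', in_simplex y -> in_simplex y' ->
    forall i j, `|f y i j - f y' i j| <= L * \sum_(k : A) `|y k - y' k|) ->
  forall y, in_simplex y -> forall a b,
   `|f y a b| <= \sum_i \sum_j `|f y0 i j| + 2 * `|L|.
Proof.
move=> s0 hL y sy a b.
have h1 : `|f y a b| <= `|f y0 a b| + `|f y a b - f y0 a b|.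
  by rewrite -[X in `|X|](subrK (f y0 a b)) addrC; apply: ler_normD.
have h2 : `|f y0 a b| <= \sum_i \sum_j `|f y0 i j|.
  apply: (le_trans (le_sum1 (fun j => `|f y0 a j|) b _)) => //.
  apply: (le_sum1 (fun i => \sum_j `|f y0 i j|)) => i.
  by apply: sumr_ge0.
have h3 := hL y y0 sy s0 a b.
have h4 := dist_le2 _ _ sy s0.
have h5 : 0 <= \sum_k `|y k - y0 k| by apply: sumr_ge0.
have h6 : L * \sum_k `|y k - y0 k| <= `|L| * \sum_k `|y k - y0 k|.
  by apply: ler_wpM2r => //; exact: ler_norm.
have h7 := normr_ge0 L.
nra.
Qed.

Lemma field_sum (W : H -> H -> R) (f : (A -> R) -> A -> A -> R)
  (x : A -> H -> R) i : (forall h k, W h k = W k h) ->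
  \sum_h imitation_field W f x i h =
  \sum_j \sum_h \sum_k (x i h * W h k * x j k * (f (agg x) j i - f (agg x) i j)).
Proof.
move=> Ws; rewrite /imitation_field exchange_big /=; apply: eq_bigr => j _.
under eq_bigr do rewrite sumrB.
rewrite sumrB [X in X - _]exchange_big /= -sumrB; apply: eq_bigr => h _.
rewrite -sumrB; apply: eq_bigr => k _; rewrite (Ws k h); ring.
Qed.

Lemma term_bound (r : (A -> R) -> A -> R) (eta : H -> R)
  (f : (A -> R) -> A -> A -> R) (L M : R) (y0 : A -> R) (x : A -> H -> R) i j h k :
  in_states eta x -> \sum_h eta h = 1 -> in_Ybullet r y0 -> assumption1 r f ->
  (forall y y', in_simplex y -> in_simplex y' ->
    forall i j, `|f y i j - f y' i j| <= L * \sum_(k : A) `|y k - y' k|) ->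
  (forall y, in_simplex y -> forall a b, `|f y a b| <= M) ->
  x i h * x j k * `|f (agg x) j i - f (agg x) i j|
    <= (2 * M + 2 * `|L|) * \sum_k `|agg x k - y0 k|.
Proof.
move=> hx he [sy0 hr] hA hL hM.
have sy := states_simplex _ _ hx he.
set V := \sum_k `|agg x k - y0 k|.
set d := `|f (agg x) j i - f (agg x) i j|.
have V0 : 0 <= V by apply: sumr_ge0.
have L0 := normr_ge0 L.
have xi0 : 0 <= x i h by case: hx.
have xj0 : 0 <= x j k by case: hx.
have xi1 := x_le1 _ _ i h hx he.
have xj1 := x_le1 _ _ j k hx he.
have d0 : 0 <= d by apply: normr_ge0.
have dM : d <= 2 * M.
  apply: (le_trans (ler_normB _ _)).
  have := hM _ sy j i; have := hM _ sy i j; lra.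
have M0 : 0 <= M by apply: le_trans (hM _ sy i i).
have cV a : `|agg x a - y0 a| <= V by apply: (le_sum1 (fun k => `|agg x k - y0 k|)).
have small a : y0 a = 0 -> forall h, x a h <= V.
  move=> ya h'; apply: le_trans (x_le_agg _ _ a h' hx) _.
  by apply: le_trans (cV a); rewrite ya subr0 ler_norm.
have [yi0|yi0] := eqVneq (y0 i) 0.
  have hv := small i yi0 h.
  have p1 : x i h * x j k <= V * 1 by apply: ler_pM.
  have p2 : x i h * x j k * d <= V * 1 * (2 * M).
    by apply: ler_pM => //; apply: mulr_ge0.
  have := mulr_ge0 L0 V0; nra.
have [yj0|yj0] := eqVneq (y0 j) 0.
  have hv := small j yj0 k.
  have p1 : x i h * x j k <= 1 * V by apply: ler_pM.
  have p2 : x i h * x j k * d <= 1 * V * (2 * M).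
    by apply: ler_pM => //; apply: mulr_ge0.
  have := mulr_ge0 L0 V0; nra.
have yi : 0 < y0 i by rewrite lt_def yi0 (sy0.1 i).
have yj : 0 < y0 j by rewrite lt_def yj0 (sy0.1 j).
have eqf : f y0 j i = f y0 i j.
  have := hA j i y0 sy0; rewrite (hr i j yi yj) subrr sgr0 => /eqP.
  by rewrite sgr_eq0 subr_eq0 => /eqP.
have dL : d <= 2 * `|L| * V.
  rewrite /d.
  have e : f (agg x) j i - f (agg x) i j =
     (f (agg x) j i - f y0 j i) - (f (agg x) i j - f y0 i j) by rewrite eqf; ring.
  rewrite e; apply: (le_trans (ler_normB _ _)).
  have h1 := hL _ _ sy sy0 j i; have h2 := hL _ _ sy sy0 i j.
  have h3 : L * V <= `|L| * V by apply: ler_wpM2r => //; exact: ler_norm.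
  rewrite -/V in h1 h2; lra.
have p1 : x i h * x j k <= 1 * 1 by apply: ler_pM.
have p2 : x i h * x j k * d <= 1 * 1 * (2 * `|L| * V).
  by apply: ler_pM => //; apply: mulr_ge0.
have := mulr_ge0 M0 V0; nra.
Qed.

Lemma field_bound (r : (A -> R) -> A -> R) (eta : H -> R) (W : H -> H -> R)
  (f : (A -> R) -> A -> A -> R) (L M : R) (y0 : A -> R) (x : A -> H -> R) i :
  in_states eta x -> \sum_h eta h = 1 -> in_Ybullet r y0 -> assumption1 r f ->
  (forall h k, W h k = W k h) -> (forall h k, 0 <= W h k) ->
  (forall y y', in_simplex y -> in_simplex y' ->
    forall i j, `|f y i j - f y' i j| <= L * \sum_(k : A) `|y k - y' k|) ->
  (forall y, in_simplex y -> forall a b, `|f y a b| <= M) ->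
  `|\sum_h imitation_field W f x i h| <=
    ((\sum_(j : A) \sum_(h : H) \sum_(k : H) W h k) * (2 * M + 2 * `|L|))
     * \sum_k `|agg x k - y0 k|.
Proof.
move=> hx he hy hA Ws W0 hL hM.
rewrite field_sum // -mulrA !mulr_suml.
apply: (le_trans (ler_norm_sum _ _ _)); apply: ler_sum => j _.
apply: (le_trans (ler_norm_sum _ _ _)); apply: ler_sum => h _.
rewrite mulr_suml.
apply: (le_trans (ler_norm_sum _ _ _)); apply: ler_sum => k _.
have xi0 : 0 <= x i h by case: hx.
have xj0 : 0 <= x j k by case: hx.
rewrite !normrM (ger0_norm xi0) (ger0_norm xj0) (ger0_norm (W0 h k)).
have := @term_bound r eta f L M y0 x i j h k hx he hy hA hL hM.
have := W0 h k.
set u := x i h * x j k * _; set v := _ * \sum_k _.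
move=> w0 uv.
rewrite (_ : x i h * W h k * x j k * _ = W h k * u); last by rewrite /u; ring.
by apply: ler_wpM2l.
Qed.

Lemma sq_sum_abs (a : A -> R) :
  (\sum_i `|a i|) ^+ 2 <= 2 * #|A|%:R * \sum_i a i ^+ 2.
Proof.
rewrite expr2 mulr_suml.
apply: (le_trans (y := \sum_i \sum_(j : A) (a i ^+ 2 + a j ^+ 2))).
  apply: ler_sum => i _; rewrite mulr_sumr; apply: ler_sum => j _.
  have e1 : `|a i| ^+ 2 = a i ^+ 2 := real_normK (num_real _).
  have e2 : `|a j| ^+ 2 = a j ^+ 2 := real_normK (num_real _).
  have := sqr_ge0 (`|a i| - `|a j|); nra.
have ec : #|(fun _ : A => true)| = #|A| by apply: eq_card.
rewrite (eq_bigr (fun i => a i ^+ 2 * #|A|%:R + \sum_j a j ^+ 2)); last first.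
  by move=> i _; rewrite big_split /= sumr_const mulr_natr ec.
rewrite big_split /= -mulr_suml sumr_const ec mulr_natr.
rewrite le_eqVlt; apply/orP; left; apply/eqP; ring.
Qed.
End P.

Theorem proposition2 (R : realType) (A H : finType)
  (r : (A -> R) -> A -> R) (eta : H -> R) (W : H -> H -> R)
  (f : (A -> R) -> A -> A -> R) (x : R -> A -> H -> R) :
  community_network eta W -> undirected W -> connected_net W ->
  imitation_mechanism f -> assumption1 r f ->
  is_solution eta W f x -> in_Xbullet r eta (x 0) ->
  (forall t, 0 <= t -> agg (x t) = agg (x 0)) /\
  (forall t, 0 <= t -> in_Xbullet r eta (x t)).
Proof.
move=> [eta0 [e1 [W0 Wd]]] Ws _ [_ [L hL]] hA [hst [hc hd]] [hx0 hy0].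
set y0 := agg (x 0).
set M := \sum_i \sum_j `|f y0 i j| + 2 * `|L|.
have hM : forall y, in_simplex y -> forall a b, `|f y a b| <= M.
  exact: (@f_bound R A f L y0 hy0.1 hL).
have M0 : 0 <= M.
  apply: addr_ge0; first by apply: sumr_ge0 => i _; apply: sumr_ge0.
  by apply: mulr_ge0.
set K := (\sum_(j : A) \sum_(h : H) \sum_(k : H) W h k) * (2 * M + 2 * `|L|).
have K0 : 0 <= K.
  apply: mulr_ge0; first by do 3 (apply: sumr_ge0 => ? _).
  by apply: addr_ge0; apply: mulr_ge0.
pose D := fun s => \sum_i (agg (x s) i - y0 i) ^+ 2.
pose dD := fun s => \sum_i 2 * (agg (x s) i - y0 i) *
   (\sum_h imitation_field W f (x s) i h).
pose c := 2 * K * (2 * #|A|%:R).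
have DT : forall t, 0 <= t -> D t = 0.
  apply: (@gronwall0 R D dD c).
  - by move=> s _; apply: sumr_ge0 => i _; apply: sqr_ge0.
  - by rewrite /D; apply: big1 => i _; rewrite /y0 subrr expr0n.
  - apply: (@cvg_fsum R A (fun i s => (agg (x s) i - y0 i) ^+ 2)
       (fun i => (agg (x 0) i - y0 i) ^+ 2)) => i.
    have -> : (fun s => (agg (x s) i - y0 i) ^+ 2) =
       (fun s => agg (x s) i - y0 i) * (fun s => agg (x s) i - y0 i).
      by apply/funext => s; rewrite expr2.
    have hg : (fun s => agg (x s) i - y0 i) @ 0^'+ --> agg (x 0) i - y0 i.
      have -> : (fun s => agg (x s) i - y0 i) =
          (fun s => \sum_h x s i h) - cst (y0 i) by [].
      apply: cvgB; last exact: cvg_cst.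
      exact: (@cvg_fsum R H (fun h s => x s i h) (fun h => x 0 i h)).
    by rewrite expr2; apply: cvgM.
  - move=> s s0.
    apply: (@is_derive_fsum R A (fun i s => (agg (x s) i - y0 i) ^+ 2)) => i.
    apply: is_derive_sq.
    have h1 : is_derive s 1 (fun s => \sum_h x s i h)
        (\sum_h imitation_field W f (x s) i h).
      apply: (@is_derive_fsum R H (fun h s => x s i h)) => h; exact: hd.
    have -> : (fun s => agg (x s) i - y0 i) =
          (fun s => \sum_h x s i h) - cst (y0 i) by [].
    apply: (is_derive_eq (is_deriveB h1 (is_derive_cst (y0 i) s 1))).
    by rewrite subr0.
  - move=> s s0.
    have hs := hst s (ltW s0).
    set a := fun i => agg (x s) i - y0 i.
    set V := \sum_i `|a i|.
    have hF i : `|\sum_h imitation_field W f (x s) i h| <= K * V.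
      exact: (@field_bound R A H r eta W f L M y0 (x s) i hs e1 hy0 hA Ws W0 hL hM).
    apply: (le_trans (y := \sum_i (2 * `|a i| * (K * V)))).
      apply: ler_sum => i _.
      rewrite -mulrA -[X in _ <= X]mulrA; apply: ler_wpM2l => //.
      apply: (le_trans (ler_norm _)); rewrite normrM.
      by apply: ler_wpM2l => //; exact: hF.
    have -> : \sum_i (2 * `|a i| * (K * V)) = 2 * K * V ^+ 2.
      by rewrite -mulr_suml -mulr_sumr /V; ring.
    have -> : c * D s = 2 * K * (2 * #|A|%:R * \sum_i a i ^+ 2) by rewrite /c /D; ring.
    apply: ler_wpM2l; first by apply: mulr_ge0.
    exact: sq_sum_abs.
have hagg : forall t, 0 <= t -> agg (x t) = agg (x 0).
  move=> t t0; apply/funext => i.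
  have := @psumr_eq0P R A xpredT (fun i => (agg (x t) i - y0 i) ^+ 2)
     (fun i _ => sqr_ge0 _) (DT t t0) i isT.
  by move/eqP; rewrite sqrf_eq0 subr_eq0 => /eqP.
split => // t t0; split; first exact: hst.
by rewrite hagg.
Qed.
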